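(* Let $(\mathbf M,\tau)$ be a state BL-algebra satisfying: (a) if $\tau$ is faithful, then $\tau(\mathbf M)$ is a subdirectly irreducible BL-algebra; (b) $\mathrm{Ker}(\tau)$ is either the trivial hoop $\{1\}$ or a subdirectly irreducible hoop; (c) $\mathrm{Ker}(\tau)$ and $\tau(M)$ have the disjunction property, i.e. for all $x\in\mathrm{Ker}(\tau)$ and $y\in\tau(M)$, $x\vee y=1$ implies $x=1$ or $y=1$. Then $(\mathbf M,\tau)$ is subdirectly irreducible.
   Context: A BL-algebra is an algebra $\mathbf M=(M;\wedge,\vee,\odot,\to,0,1)$ of type $\langle 2,2,2,2,0,0\rangle$ such that $(M;\wedge,\vee,0,1)$ is a bounded lattice, $(M;\odot,1)$ is a commutative monoid, and for all $a,b,c$: $c\le a\to b$ iff $a\odot c\le b$; $a\wedge b=a\odot(a\to b)$; $(a\to b)\vee(b\to a)=1$. A filter is a nonempty subset closed under $\odot$ and upward closed. A state-operator on $\mathbf M$ is a map $\tau:M\to M$ such that for all $x,y$: $\tau(0)=0$; $\tau(x\to y)=\tau(x)\to\tau(x\wedge y)$; $\tau(x\odot y)=\tau(x)\odot\tau(x\to(x\odot y))$; $\tau(\tau(x)\odot\tau(y))=\tau(x)\odot\tau(y)$; $\tau(\tau(x)\to\tau(y))=\tau(x)\to\tau(y)$; $(\mathbf M,\tau)$ is a state BL-algebra (algebra with extra unary operation $\tau$). Its congruences correspond to $\tau$-filters (filters $F$ with $\tau(F)\subseteq F$), so it is subdirectly irreducible iff it has a least $\tau$-filter different from $\{1\}$.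 $\mathrm{Ker}(\tau)=\{a:\tau(a)=1\}$; $\tau$ is faithful if $\mathrm{Ker}(\tau)=\{1\}$. $\tau(M)$ is a subalgebra (BL-algebra $\tau(\mathbf M)$). $\mathrm{Ker}(\tau)$ is a hoop under $\odot,\to,1$; its filters are nonempty subsets closed under $\odot$ and upward closed in $\mathrm{Ker}(\tau)$, and it is subdirectly irreducible if it has a least filter different from $\{1\}$. *)

(* Defs.v *)
Record BLalgebra := {
  car :> Type;
  bmeet : car -> car -> car;
  bjoin : car -> car -> car;
  bmul  : car -> car -> car;
  bimp  : car -> car -> car;
  bzero : car;
  bone  : car;
  meetC : forall x y, bmeet x y = bmeet y x;
  joinC : forall x y, bjoin x y = bjoin y x;
  meetA : forall x y z, bmeet x (bmeet y z) = bmeet (bmeet x y) z;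
  joinA : forall x y z, bjoin x (bjoin y z) = bjoin (bjoin x y) z;
  meetJ : forall x y, bmeet x (bjoin x y) = x;
  joinM : forall x y, bjoin x (bmeet x y) = x;
  meet0 : forall x, bmeet bzero x = bzero;
  meet1 : forall x, bmeet bone x = x;
  mulA : forall x y z, bmul x (bmul y z) = bmul (bmul x y) z;
  mulC : forall x y, bmul x y = bmul y x;
  mul1 : forall x, bmul x bone = x;
  (* residuation, divisibility, prelinearity; x <= y means x /\ y = x *)
  resid : forall a b c, bmeet c (bimp a b) = c <-> bmeet (bmul a c) b = bmul a c;
  divis : forall a b, bmeet a b = bmul a (bimp a b);
  prelin : forall a b, bjoin (bimp a b) (bimp b a) = bone
}.

Arguments bmeet {_}. Arguments bjoin {_}. Arguments bmul {_}.
Arguments bimp {_}. Arguments bzero {_}. Arguments bone {_}.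

Definition ble {M : BLalgebra} (x y : M) : Prop := bmeet x y = x.

Definition state_operator (M : BLalgebra) (tau : M -> M) : Prop :=
  tau bzero = bzero /\
  (forall x y, tau (bimp x y) = bimp (tau x) (tau (bmeet x y))) /\
  (forall x y, tau (bmul x y) = bmul (tau x) (tau (bimp x (bmul x y)))) /\
  (forall x y, tau (bmul (tau x) (tau y)) = bmul (tau x) (tau y)) /\
  (forall x y, tau (bimp (tau x) (tau y)) = bimp (tau x) (tau y)).

Definition is_filter (M : BLalgebra) (F : M -> Prop) : Prop :=
  (exists x, F x) /\
  (forall x y, F x -> F y -> F (bmul x y)) /\
  (forall x y, F x -> ble x y -> F y).

Definition tau_filter (M : BLalgebra) (tau : M -> M) (F : M -> Prop) : Prop :=
  is_filter M F /\ (forall x, F x -> F (tau x)).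

Definition nontrivial_set (M : BLalgebra) (F : M -> Prop) : Prop :=
  ~ (forall x, F x <-> x = bone).

(* (M, tau) subdirectly irreducible: least tau-filter different from {1} *)
Definition state_SI (M : BLalgebra) (tau : M -> M) : Prop :=
  exists F, tau_filter M tau F /\ nontrivial_set M F /\
    forall G, tau_filter M tau G -> nontrivial_set M G ->
      forall x, F x -> G x.

(* filters of a substructure S (subalgebra tau(M), or the hoop Ker tau):
   nonempty subsets of S closed under product and upward closed in S *)
Definition is_subfilter (M : BLalgebra) (S F : M -> Prop) : Prop :=
  (forall x, F x -> S x) /\
  (exists x, F x) /\
  (forall x y, F x -> F y -> F (bmul x y)) /\
  (forall x y, F x -> S y -> ble x y -> F y).

Definition sub_SI (M : BLalgebra) (S : M -> Prop) : Prop :=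
  exists F, is_subfilter M S F /\ nontrivial_set M F /\
    forall G, is_subfilter M S G -> nontrivial_set M G ->
      forall x, F x -> G x.

Definition Ker (M : BLalgebra) (tau : M -> M) (a : M) : Prop := tau a = bone.

Definition image (M : BLalgebra) (tau : M -> M) (y : M) : Prop :=
  exists x, y = tau x.

Definition faithful (M : BLalgebra) (tau : M -> M) : Prop :=
  forall a, Ker M tau a -> a = bone.

(* Main.v *)
Require Import Defs.
From Stdlib Require Import Classical.

Lemma meet_idem (M:BLalgebra) (x:M): bmeet x x = x.
Proof. transitivity (bmeet x (bjoin x (bmeet x x))). rewrite (joinM M); reflexivity. apply (meetJ M). Qed.

Lemma ble_refl (M:BLalgebra) (x:M): ble x x.
Proof. apply meet_idem. Qed.

Lemma ble_trans (M:BLalgebra) (x y z:M): ble x y -> ble y z -> ble x z.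
Proof. unfold ble; intros H1 H2. rewrite <- H1, <- (meetA M), H2. reflexivity. Qed.

Lemma ble_1 (M:BLalgebra) (x:M): ble x bone.
Proof. unfold ble. rewrite (meetC M). apply (meet1 M). Qed.

Lemma ble_1_eq (M:BLalgebra) (x:M): ble bone x -> x = bone.
Proof. unfold ble. intro H. rewrite (meet1 M) in H. exact H. Qed.

Lemma imp_self (M:BLalgebra) (x:M): bimp x x = bone.
Proof. apply ble_1_eq. unfold ble. apply (resid M). rewrite (mul1 M). apply meet_idem. Qed.

Lemma mul_le (M:BLalgebra) (x y:M): ble (bmul x y) x.
Proof. unfold ble. apply (resid M). rewrite imp_self. apply ble_1. Qed.

Lemma mul_le_r (M:BLalgebra) (x y:M): ble (bmul x y) y.
Proof. rewrite (mulC M). apply mul_le. Qed.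

Lemma mul_mono (M:BLalgebra) (x y z:M): ble x y -> ble (bmul x z) (bmul y z).
Proof.
  intro H. unfold ble. rewrite (mulC M x z). apply (resid M).
  apply ble_trans with y; auto. unfold ble. apply (resid M). rewrite (mulC M z y). apply meet_idem.
Qed.

Lemma mul_mono2 (M:BLalgebra) (x y u v:M): ble x y -> ble u v -> ble (bmul x u) (bmul y v).
Proof.
  intros H1 H2. apply ble_trans with (bmul y u). apply mul_mono; auto.
  rewrite (mulC M y u), (mulC M y v). apply mul_mono; auto.
Qed.

Lemma le_join_r (M:BLalgebra) (x y:M): ble y (bjoin x y).
Proof. unfold ble. rewrite (joinC M). apply (meetJ M). Qed.

Section S.
End S.

Lemma tau_one (M:BLalgebra) tau : state_operator M tau -> tau bone = bone.
Proof.
  intros [H0 [Hi _]]. specialize (Hi bzero bzero). rewrite (meet0 M), H0, !imp_self in Hi.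
  exact Hi.
Qed.

Lemma tau_idem (M:BLalgebra) tau : state_operator M tau -> forall x, tau (tau x) = tau x.
Proof.
  intros H x. pose proof (tau_one M tau H) as H1. destruct H as [_ [_ [_ [Hm _]]]].
  specialize (Hm x bone). rewrite H1, !(mul1 M) in Hm. exact Hm.
Qed.

Lemma tau_mono (M:BLalgebra) tau : state_operator M tau -> forall x y, ble x y -> ble (tau x) (tau y).
Proof.
  intros H x y Hxy. destruct H as [_ [_ [Hm _]]].
  assert (E: x = bmul y (bimp y x)). { rewrite <- (divis M), (meetC M). symmetry. exact Hxy. }
  rewrite E, Hm. apply mul_le.
Qed.

Lemma nontriv_ex (M:BLalgebra) (F: M -> Prop) : F bone -> nontrivial_set M F ->
  exists a, F a /\ a <> bone.
Proof.
  intros H1 Hn. apply NNPP. intro C. apply Hn. intro x. split.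
  - intro Fx. apply NNPP. intro D. apply C. exists x; auto.
  - intros ->. exact H1.
Qed.

Theorem theorem2p3 (M : BLalgebra) (tau : M -> M)
  (Hst : state_operator M tau)
  (Ha : faithful M tau -> sub_SI M (image M tau))
  (Hb : (forall a, Ker M tau a <-> a = bone) \/ sub_SI M (Ker M tau))
  (Hc : forall x y, Ker M tau x -> image M tau y ->
          bjoin x y = bone -> x = bone \/ y = bone) :
  state_SI M tau.
Proof.
  pose proof (tau_one M tau Hst) as T1.
  pose proof (tau_idem M tau Hst) as TI.
  pose proof (tau_mono M tau Hst) as TM.
  assert (Gone: forall G, tau_filter M tau G -> G bone).
  { intros G [[[x Gx] [_ Gu]] _]. apply (Gu x); auto. apply ble_1. }
  destruct Hb as [Hk | HK].
  -
    assert (Hf: faithful M tau). { intros a Ha'. apply Hk. exact Ha'. }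
    destruct (Ha Hf) as [F0 [[FS [[f0 Ff0] [Fm Fu]]] [Fn Fmin]]].
    assert (F1: F0 bone). { apply (Fu f0); auto. exists bone; auto. apply ble_1. }
    destruct (nontriv_ex M F0 F1 Fn) as [f [Ff fne]].
    exists (fun x => exists g, F0 g /\ ble g x). split; [|split].
    + split; [split; [|split]|].
      * exists f0; exists f0; split; auto; apply ble_refl.
      * intros x y [g1 [F1' l1]] [g2 [F2 l2]]. exists (bmul g1 g2); split; auto.
        apply mul_mono2; auto.
      * intros x y [g [Fg lg]] lxy. exists g; split; auto. eapply ble_trans; eauto.
      * intros x [g [Fg lg]]. exists g; split; auto.
        destruct (FS g Fg) as [z ->]. rewrite <- TI. apply TM; auto.
    + intro C. apply fne. apply C. exists f; split; auto. apply ble_refl.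
    + intros G HG HGn x [g [Fg lg]].
      destruct HG as [[Gne [Gm Gu]] Gt] eqn:EG.
      destruct (nontriv_ex M G (Gone G HG) HGn) as [a [Ga ane]].
      apply (Gu g); auto.
      apply (Fmin (fun y => G y /\ image M tau y)); [| |exact Fg].
      * split; [|split; [|split]].
        -- intros y [_ Hy]; exact Hy.
        -- exists bone; split; [apply Gone; auto| exists bone; auto].
        -- intros y z [Gy [y' ->]] [Gz [z' ->]]. split; auto.
           exists (bmul (tau y') (tau z')). destruct Hst as [_ [_ [_ [Hm _]]]]. rewrite Hm; auto.
        -- intros y z [Gy _] Sz lyz. split; auto. apply (Gu y); auto.
      * intro C. assert (tau a = bone). { apply C. split; auto. exists a; auto. }
        apply ane. apply Hf. exact H.
  -
    destruct HK as [K0 [[KS [[k0 Kk0] [Km Ku]]] [Kn Kmin]]].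
    assert (Kup: forall x y, Ker M tau x -> ble x y -> Ker M tau y).
    { unfold Ker; intros x y Hx lxy. apply ble_1_eq. rewrite <- Hx. apply TM; auto. }
    assert (K1: K0 bone). { apply (Ku k0); auto. unfold Ker; auto. apply ble_1. }
    destruct (nontriv_ex M K0 K1 Kn) as [k [Kk kne]].
    exists K0. split; [|split; auto].
    + split; [split; [exists k0; auto|split; auto]|].
      * intros x y Kx lxy. apply (Ku x); auto. apply (Kup x); auto.
      * intros x Kx. rewrite (KS x Kx). exact K1.
    + intros G HG HGn x Kx.
      destruct HG as [[Gne [Gm Gu]] Gt] eqn:EG.
      destruct (nontriv_ex M G (Gone G HG) HGn) as [a [Ga ane]].
      assert (Kmul: forall x y, Ker M tau x -> Ker M tau y -> Ker M tau (bmul x y)).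
      { unfold Ker; intros u v Hu Hv. destruct Hst as [_ [_ [Hm _]]]. rewrite Hm, Hu.
        assert (tau (bimp u (bmul u v)) = bone).
        { apply ble_1_eq. rewrite <- Hv. apply TM. unfold ble. apply (resid M). apply meet_idem. }
        rewrite H. apply (mul1 M). }
      assert (Hex: exists b, G b /\ Ker M tau b /\ b <> bone).
      { destruct (classic (tau a = bone)) as [E|E].
        - exists a; auto.
        - exists (bjoin k (tau a)). split; [|split].
          + apply (Gu (tau a)); auto. apply le_join_r.
          + apply (Kup k). apply KS; auto. unfold ble. apply (meetJ M).
          + intro C. destruct (Hc k (tau a) (KS k Kk) (ex_intro _ a eq_refl) C); auto. }
      destruct Hex as [b [Gb [Kb bne]]].
      apply (Kmin (fun y => G y /\ Ker M tau y)); [| |exact Kx].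
      * split; [|split; [|split]].
        -- intros y [_ Hy]; exact Hy.
        -- exists bone; split; [apply Gone; auto| unfold Ker; auto].
        -- intros y z [Gy Ky] [Gz Kz]. split; auto.
        -- intros y z [Gy _] Sz lyz. split; auto. apply (Gu y); auto.
      * intro C. apply bne. apply C. split; auto.
Qed.
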